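(* Let $G$ be a two-player game with a finite set $\mathcal{P}$ of positions as in the context, let $x$ be a Richman function for $G$, and let $T$ be the set defined from $x$ as in the context. If every position that is quiescent with respect to $x$ belongs to $T$, then every position belongs to $T$.
   Context: The game is given by a finite set $\mathcal{P}$ of positions; each non-terminal position $P$ has a nonempty set of White options $P_w$ and a nonempty set of Black options $P_b$. Terminal positions are designated as White wins or Black wins. A Richman function is a function $x:\mathcal{P}\to[0,1]$ with $x(P)=1$ at terminal White wins, $x(P)=0$ at terminal Black wins, and $x(P)=\frac12(\max_w x(P_w)+\min_b x(P_b))$ at every non-terminal $P$. A White move from $P$ to $P_w$ is $x$-greedy if $x(P_w)=\max_{w'}x(P_{w'})$. Let $T_0$ be the set of terminal positions, and for $n\ge0$ let $T_{n+1}$ consist of the positions that belong to $T_n$, or have an $x$-greedy White option in $T_n$, or have all of their Black options in $T_n$; let $T=\bigcup_n T_n$. A non-terminal position $P$ is quiescent with respect to $x$ if $\min_b x(P_b)=\max_w x(P_w)$. *)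

(* Defs.v *)
From mathcomp Require Import all_boot all_order all_algebra.
Set Implicit Arguments. Unset Strict Implicit. Unset Printing Implicit Defensive.
Import Order.TTheory GRing.Theory Num.Theory.
Local Open Scope ring_scope.

Section Game.
Variables (R : realFieldType) (P : finType).
(* term p : p is terminal; wwin p : (terminal) p is a White win.
   Wo p / Bo p : White / Black options of p (only meaningful for non-terminal p). *)
Variables (term wwin : pred P) (Wo Bo : P -> {set P}) (x : P -> R).

Definition is_maxval (A : {set P}) (v : R) : Prop :=
  (exists2 a, a \in A & x a = v) /\ (forall a, a \in A -> x a <= v).
Definition is_minval (A : {set P}) (v : R) : Prop :=
  (exists2 a, a \in A & x a = v) /\ (forall a, a \in A -> v <= x a).

Definition well_formed_game : Prop :=
  forall p, ~~ term p -> Wo p != set0 /\ Bo p != set0.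

Definition richman : Prop :=
  (forall p, 0 <= x p <= 1) /\
  (forall p, term p -> wwin p -> x p = 1) /\
  (forall p, term p -> ~~ wwin p -> x p = 0) /\
  (forall p, ~~ term p -> exists M m,
     is_maxval (Wo p) M /\ is_minval (Bo p) m /\ x p = (M + m) / 2).

Definition greedy (p w : P) : Prop := w \in Wo p /\ is_maxval (Wo p) (x w).

Fixpoint Tn (n : nat) (p : P) : Prop :=
  match n with
  | 0 => term p
  | n'.+1 => Tn n' p
             \/ (exists w, greedy p w /\ Tn n' w)
             \/ (forall b, b \in Bo p -> Tn n' b)
  end.

Definition inT (p : P) : Prop := exists n, Tn n p.

Definition quiescent (p : P) : Prop :=
  ~~ term p /\ exists v, is_minval (Bo p) v /\ is_maxval (Wo p) v.
End Game.

(* Main.v *)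
Require Import Defs.
From mathcomp Require Import all_boot all_order all_algebra.
From Stdlib Require Import ClassicalEpsilon.
From mathcomp Require Import lra.
Import Order.TTheory GRing.Theory Num.Theory.
Local Open Scope ring_scope.

Section Aux.
Variables (R : realFieldType) (P : finType).
Variables (term wwin : pred P) (Wo Bo : P -> {set P}) (x : P -> R).

Lemma Tn_mono n k p : Tn term Wo Bo x n p -> Tn term Wo Bo x (k + n) p.
Proof. by elim: k => //= k IH H; left; apply: IH. Qed.

Lemma Tn_le n m p : (n <= m)%N -> Tn term Wo Bo x n p -> Tn term Wo Bo x m p.
Proof. by move=> /subnK <-; apply: Tn_mono. Qed.

Lemma inT_seq (s : seq P) : (forall b, b \in s -> inT term Wo Bo x b) ->
  exists n, forall b, b \in s -> Tn term Wo Bo x n b.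
Proof.
elim: s => [|a s IH] H; first by exists 0%N.
have [na Ha] := H a (mem_head _ _).
have [ns Hs] : exists n, forall b, b \in s -> Tn term Wo Bo x n b.
  by apply: IH => b bs; apply: H; rewrite inE bs orbT.
exists (maxn na ns) => b; rewrite inE => /orP [/eqP -> | bs].
  by apply: Tn_le Ha; apply: leq_maxl.
by apply: Tn_le (Hs b bs); apply: leq_maxr.
Qed.
End Aux.

Theorem proposition3 (R : realFieldType) (P : finType)
    (term wwin : pred P) (Wo Bo : P -> {set P}) (x : P -> R) :
  well_formed_game term Wo Bo ->
  richman term wwin Wo Bo x ->
  (forall p, quiescent term Wo Bo x p -> inT term Wo Bo x p) ->
  forall p, inT term Wo Bo x p.
Proof.
move=> _ [_ [_ [_ Hrich]]] Hq p0.
pose pb q := if excluded_middle_informative (inT term Wo Bo x q) then false else true.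
case: (excluded_middle_informative (inT term Wo Bo x p0)) => // Hp0.
exfalso.
have pbP q : reflect (~ inT term Wo Bo x q) (pb q).
  rewrite /pb; case: excluded_middle_informative => H; constructor => //.
have pb0 : pb p0 by apply/pbP.
case: (@arg_maxP _ _ _ p0 pb x pb0) => p /pbP Hp Hmax.
have nt : ~~ term p by apply/negP => t; apply: Hp; exists 0%N.
have [M [m [[[w wW xw] Mmax] [[[b bB xb] mmin] xp]]]] := Hrich p nt.
have HwT : ~ inT term Wo Bo x w.
  move=> [n Hn]; apply: Hp; exists n.+1; right; left; exists w; split=> //.
  by rewrite /greedy; split => //; split; [exists w | rewrite xw].
have HMle : M <= x p by rewrite -xw; apply: Hmax; apply/pbP.
have [b' b'B Hb'] : exists2 b', b' \in Bo p & ~ inT term Wo Bo x b'.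
  case: (excluded_middle_informative (exists2 b', b' \in Bo p & ~ inT term Wo Bo x b')) => // H.
  exfalso; apply: Hp.
  have [n Hn] : exists n, forall c, c \in enum (Bo p) -> Tn term Wo Bo x n c.
    apply: inT_seq => c; rewrite mem_enum => cB.
    case: (excluded_middle_informative (inT term Wo Bo x c)) => // Hc.
    by exfalso; apply: H; exists c.
  by exists n.+1; right; right => c cB; apply: Hn; rewrite mem_enum.
have Hmle : m <= x p.
  apply: le_trans (mmin _ b'B) _; apply: Hmax; exact/pbP.
have eMm : M = m.
  apply/eqP; rewrite eq_le; apply/andP; split.
  - have : M <= (M + m) / 2 by rewrite -xp.
    by move=> h; lra.
  - have : m <= (M + m) / 2 by rewrite -xp.
    by move=> h; lra.
apply: Hp; apply: Hq; split => //; exists M; split.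
- by split; [exists b => //; rewrite xb eMm | rewrite eMm].
- by split; [exists w |].
Qed.
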